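(* Define $f_i:\mathbb{R}^3\times\mathbb{R}^2\to\mathbb{R}$ by $f_1(p,x)=-x_2-\tfrac12x_1^2-p_1+p_2x_2$, $f_2(p,x)=x_2-\tfrac12x_1^2-p_2+p_1x_1$, $f_3(p,x)=x_1+|x_2|^{3/2}-p_3$, and let $P:=\{p\in\mathbb{R}^3: -p_1-p_2+\tfrac32p_1^2\le0\}$. Then the parametric system $f_i(p,x)\le0$, $i=1,2,3$, $p\in P$, enjoys Robinson stability at $(\bar p,\bar x)=(0,0)\in\mathbb{R}^3\times\mathbb{R}^2$, i.e. there exist $\kappa\ge0$ and neighborhoods $V$ of $0$ in $P$ and $U$ of $0$ in $\mathbb{R}^2$ such that $\operatorname{dist}(x;\Gamma(p))\le\kappa\operatorname{dist}((f_1,f_2,f_3)(p,x);\mathbb{R}^3_-)$ for all $(p,x)\in V\times U$, where $\Gamma(p)=\{x:f_i(p,x)\le0,\ i=1,2,3\}$; whereas the Mangasarian–Fromovitz constraint qualification fails for the system $f_i(0,x)\le0$, $i=1,2,3$, at $x=0$.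
   Context: The Mangasarian–Fromovitz constraint qualification for the inequality system $\phi_i(x)\le0$ at a feasible $\bar x$ (all $\phi_i$ differentiable) means there exists $d$ with $\langle\nabla\phi_i(\bar x),d\rangle<0$ for all active indices $i$ (those with $\phi_i(\bar x)=0$). *)

(* Defs.v *)
From Stdlib Require Import Reals Lra.
Open Scope R_scope.

(* |t|^(3/2), written so that it is correct at t = 0
   (Stdlib's Rpower 0 y is not 0). *)
Definition abs32 (t : R) : R := Rabs t * sqrt (Rabs t).

Definition f (i : nat) (p1 p2 p3 x1 x2 : R) : R :=
  match i with
  | 1%nat => - x2 - / 2 * x1 ^ 2 - p1 + p2 * x2
  | 2%nat => x2 - / 2 * x1 ^ 2 - p2 + p1 * x1
  | _     => x1 + abs32 x2 - p3
  end.

Definition idx (i : nat) : Prop := (1 <= i <= 3)%nat.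

Definition inP (p1 p2 p3 : R) : Prop := - p1 - p2 + 3 / 2 * p1 ^ 2 <= 0.

Definition Gamma (p1 p2 p3 : R) (y1 y2 : R) : Prop :=
  forall i, idx i -> f i p1 p2 p3 y1 y2 <= 0.

Definition norm2 (a b : R) : R := sqrt (a ^ 2 + b ^ 2).
Definition norm3 (a b c : R) : R := sqrt (a ^ 2 + b ^ 2 + c ^ 2).

(* dist((y1,y2); S) <= r, with dist = infimum of Euclidean distances
   (inf of the empty set = +infinity). *)
Definition dist2_le (S : R -> R -> Prop) (x1 x2 r : R) : Prop :=
  forall eps, 0 < eps -> exists y1 y2, S y1 y2 /\ norm2 (x1 - y1) (x2 - y2) <= r + eps.

(* dist(x; Gamma(p)) <= kappa * dist(F(p,x); R^3_-), with the distance to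
   R^3_- written as an infimum over points z of R^3_- (kappa >= 0). *)
Definition robinson_ineq (kappa p1 p2 p3 x1 x2 : R) : Prop :=
  forall z1 z2 z3, z1 <= 0 -> z2 <= 0 -> z3 <= 0 ->
    dist2_le (Gamma p1 p2 p3) x1 x2
      (kappa * norm3 (f 1 p1 p2 p3 x1 x2 - z1)
                     (f 2 p1 p2 p3 x1 x2 - z2)
                     (f 3 p1 p2 p3 x1 x2 - z3)).

(* Robinson stability at (pbar, xbar) = (0, 0): there are kappa >= 0 and
   neighbourhoods V of 0 in P and U of 0 in R^2 (containing balls of radius
   delta) on which the estimate holds. *)
Definition robinson_stable_at_0 : Prop :=
  exists kappa delta, 0 <= kappa /\ 0 < delta /\
    forall p1 p2 p3 x1 x2,
      inP p1 p2 p3 -> norm3 p1 p2 p3 < delta -> norm2 x1 x2 < delta ->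
      robinson_ineq kappa p1 p2 p3 x1 x2.

Definition has_grad (g : R -> R -> R) (a1 a2 g1 g2 : R) : Prop :=
  forall eps, 0 < eps -> exists delta, 0 < delta /\
    forall h1 h2, norm2 h1 h2 < delta ->
      Rabs (g (a1 + h1) (a2 + h2) - g a1 a2 - (g1 * h1 + g2 * h2))
        <= eps * norm2 h1 h2.

Definition phi (i : nat) (x1 x2 : R) : R := f i 0 0 0 x1 x2.

Definition MFCQ_at_0 : Prop :=
  exists d1 d2, forall i, idx i -> phi i 0 0 = 0 ->
    forall g1 g2, has_grad (phi i) 0 0 g1 g2 -> g1 * d1 + g2 * d2 < 0.

(* Main.v *)
Require Import Defs.
From Stdlib Require Import Reals Lra Psatz.
Open Scope R_scope.

Lemma abs_le_sqrt a s : 0 <= s -> Rabs a <= sqrt (a^2 + s).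
Proof.
  intros Hs. rewrite <- sqrt_Rsqr_abs. apply sqrt_le_1_alt. unfold Rsqr. nra.
Qed.

Lemma n3_1 a b c : Rabs a <= norm3 a b c.
Proof. unfold norm3. replace (a^2+b^2+c^2) with (a^2 + (b^2+c^2)) by ring.
  apply abs_le_sqrt; nra. Qed.
Lemma n3_2 a b c : Rabs b <= norm3 a b c.
Proof. unfold norm3. replace (a^2+b^2+c^2) with (b^2 + (a^2+c^2)) by ring.
  apply abs_le_sqrt; nra. Qed.
Lemma n3_3 a b c : Rabs c <= norm3 a b c.
Proof. unfold norm3. replace (a^2+b^2+c^2) with (c^2 + (a^2+b^2)) by ring.
  apply abs_le_sqrt; nra. Qed.
Lemma n2_1 a b : Rabs a <= norm2 a b.
Proof. unfold norm2. apply abs_le_sqrt; nra. Qed.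
Lemma n2_2 a b : Rabs b <= norm2 a b.
Proof. unfold norm2. replace (a^2+b^2) with (b^2 + a^2) by ring.
  apply abs_le_sqrt; nra. Qed.

Lemma n2_le a b : norm2 a b <= Rabs a + Rabs b.
Proof.
  unfold norm2. rewrite <- (sqrt_pow2 (Rabs a + Rabs b)).
  2:{ pose proof (Rabs_pos a); pose proof (Rabs_pos b); lra. }
  apply sqrt_le_1_alt. rewrite <- (pow2_abs a), <- (pow2_abs b).
  pose proof (Rabs_pos a); pose proof (Rabs_pos b); nra.
Qed.

Lemma sqrt_small a : Rabs a <= 1/9 -> sqrt (Rabs a) <= 1/3.
Proof.
  intros H. replace (1/3) with (sqrt ((1/3)^2)).
  - apply sqrt_le_1_alt; lra.
  - apply sqrt_pow2; lra.
Qed.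

Lemma abs32_lip a b : Rabs a <= 1/9 -> Rabs b <= 1/9 ->
  abs32 b <= abs32 a + 2/3 * Rabs (b - a).
Proof.
  intros Ha Hb. unfold abs32.
  pose proof (sqrt_small a Ha) as Su. pose proof (sqrt_small b Hb) as Sv.
  pose proof (sqrt_pos (Rabs a)) as Pu. pose proof (sqrt_pos (Rabs b)) as Pv.
  pose proof (sqrt_sqrt (Rabs a) (Rabs_pos a)) as Eu.
  pose proof (sqrt_sqrt (Rabs b) (Rabs_pos b)) as Ev.
  pose proof (Rabs_triang_inv b a) as T.
  set (u := sqrt (Rabs a)) in *. set (v := sqrt (Rabs b)) in *.
  rewrite <- Eu, <- Ev in T |- *.
  assert (v*v - u*u <= Rabs (b-a)) by lra.
  destruct (Rle_dec u v).
  - assert ((v*v+u*v+u*u) <= 2/3*(u+v)) by nra.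
    assert (v*v*v - u*u*u <= 2/3*(v*v-u*u)) by nra. lra.
  - assert (v <= u) by lra. assert (v*v <= u*u) by nra. assert (v*v*v <= u*u*u) by nra.
    pose proof (Rabs_pos (b-a)). lra.
Qed.

Lemma abs_bnd a b : Rabs a <= b -> -b <= a <= b.
Proof. unfold Rabs; destruct (Rcase_abs a); lra. Qed.

Lemma D_lemma p1 p2 p3 y1 x2 : inP p1 p2 p3 -> Rabs p1 <= 1/100 -> Rabs p2 <= 1/100 ->
  Defs.f 1 p1 p2 p3 y1 x2 + (1 - p2) * Defs.f 2 p1 p2 p3 y1 x2 <= 0.
Proof.
  unfold inP, Defs.f. intros HP H1 H2.
  apply abs_bnd in H1; apply abs_bnd in H2.
  set (c := 1 - p2).
  assert (Hs : 0 <= p1 + p2 - 3/2*p1^2) by lra.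
  set (s := p1 + p2 - 3/2*p1^2) in *.
  assert (Hp2 : p2 = s - p1 + 3/2*p1^2) by (unfold s; ring).
  assert (Hsle : s <= 1/20) by (unfold s; nra).
  assert (K : p1 + c * p2 >= 2/5 * p1^2).
  { unfold c. rewrite Hp2.
    assert (0 <= s * (1 - s + 2*p1 - 3*p1^2)) by (apply Rmult_le_pos; nra).
    assert (0 <= p1^2 * (1/10 + 3*p1 - 9/4*p1^2)) by (apply Rmult_le_pos; nra).
    nra. }
  assert (Hc : 99/100 <= c <= 101/100) by (unfold c; lra).
  assert (Hx : p2 * x2 = (1 - c) * x2) by (unfold c; ring).
  rewrite Hx.
  assert (Q : 0 <= ((1+c)*y1 - c*p1)^2) by apply pow2_ge_0.
  assert (G : 2*(1+c) * (-(1+c)/2*y1^2 + c*p1*y1 - p1 - c*p2) <= 0) by nra.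
  assert (G2 : -(1+c)/2*y1^2 + c*p1*y1 - p1 - c*p2 <= 0).
  { destruct (Rle_dec (-(1+c)/2*y1^2 + c*p1*y1 - p1 - c*p2) 0); auto. nra. }
  replace (1 - p2) with c by reflexivity.
  nra.
Qed.

Lemma rob : robinson_stable_at_0.
Proof.
  exists 10, (1/100). split; [lra|split;[lra|]].
  intros p1 p2 p3 x1 x2 HP Hp Hx z1 z2 z3 Hz1 Hz2 Hz3 eps Heps.
  assert (B1 : -(1/100) <= p1 <= 1/100) by (apply abs_bnd; pose proof (n3_1 p1 p2 p3); lra).
  assert (B2 : -(1/100) <= p2 <= 1/100) by (apply abs_bnd; pose proof (n3_2 p1 p2 p3); lra).
  assert (B3 : -(1/100) <= p3 <= 1/100) by (apply abs_bnd; pose proof (n3_3 p1 p2 p3); lra).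
  assert (A1 : Rabs x1 <= 1/100) by (pose proof (n2_1 x1 x2); lra).
  assert (A2 : Rabs x2 <= 1/100) by (pose proof (n2_2 x1 x2); lra).
  pose proof (abs_bnd _ _ A1) as X1. pose proof (abs_bnd _ _ A2) as X2.
  assert (S2 : sqrt (Rabs x2) <= 1/3) by (apply sqrt_small; lra).
  set (F1 := Defs.f 1 p1 p2 p3 x1 x2).
  set (F2 := Defs.f 2 p1 p2 p3 x1 x2).
  set (F3 := Defs.f 3 p1 p2 p3 x1 x2).
  assert (HF1 : F1 <= 3/100) by (unfold F1, Defs.f; nra).
  assert (HF2 : F2 <= 3/100) by (unfold F2, Defs.f; nra).
  assert (HF3 : F3 <= 3/100).
  { unfold F3, Defs.f, abs32. pose proof (sqrt_pos (Rabs x2)). pose proof (Rabs_pos x2). nra. }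
  set (m := Rmax 0 (Rmax F1 (Rmax F2 F3))).
  assert (m0 : 0 <= m) by apply Rmax_l.
  assert (m1 : F1 <= m) by (unfold m; eapply Rle_trans; [|apply Rmax_r]; apply Rmax_l).
  assert (m2 : F2 <= m) by (unfold m; eapply Rle_trans; [|apply Rmax_r];
     eapply Rle_trans; [|apply Rmax_r]; apply Rmax_l).
  assert (m3 : F3 <= m) by (unfold m; eapply Rle_trans; [|apply Rmax_r];
     eapply Rle_trans; [|apply Rmax_r]; apply Rmax_r).
  assert (mB : m <= 3/100).
  { unfold m. apply Rmax_lub; [lra|]. apply Rmax_lub; [lra|]. apply Rmax_lub; lra. }
  set (M := norm3 (F1 - z1) (F2 - z2) (F3 - z3)).
  assert (mM : m <= M).
  { unfold m. apply Rmax_lub; [apply sqrt_pos|].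
    pose proof (n3_1 (F1 - z1) (F2 - z2) (F3 - z3)).
    pose proof (n3_2 (F1 - z1) (F2 - z2) (F3 - z3)).
    pose proof (n3_3 (F1 - z1) (F2 - z2) (F3 - z3)).
    pose proof (Rle_abs (F1 - z1)). pose proof (Rle_abs (F2 - z2)). pose proof (Rle_abs (F3 - z3)).
    fold M in H, H0, H1.
    apply Rmax_lub; [lra|]. apply Rmax_lub; lra. }
  set (t := 4 * m).
  set (y1 := x1 - t).
  set (c := 1 - p2).
  set (r := / c).
  assert (Hc : 99/100 <= c) by (unfold c; lra).
  assert (Hr : 0 < r) by (unfold r; apply Rinv_0_lt_compat; lra).
  assert (Hcr : c * r = 1) by (unfold r; field; lra).
  assert (Hr2 : r <= 100/99) by nra.
  set (g1 := Defs.f 1 p1 p2 p3 y1 x2).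
  set (g2 := Defs.f 2 p1 p2 p3 y1 x2).
  assert (DL : g1 + c * g2 <= 0) by (apply D_lemma; auto; apply Rabs_le; lra).
  assert (Eg1 : g1 = F1 + x1*t - t^2/2) by (unfold g1, F1, Defs.f, y1; field).
  assert (Eg2 : g2 = F2 + x1*t - t^2/2 - p1*t) by (unfold g2, F2, Defs.f, y1; field).
  set (w := Rmax 0 g2). set (v := Rmax 0 g1 * r).
  assert (w0 : 0 <= w) by apply Rmax_l.
  assert (v0 : 0 <= v) by (unfold v; pose proof (Rmax_l 0 g1); nra).
  assert (wB : w <= 108/100 * m) by (unfold w; apply Rmax_lub; unfold t in *; nra).
  assert (vB0 : Rmax 0 g1 <= 104/100 * m) by (apply Rmax_lub; unfold t in *; nra).
  assert (vB : v <= 106/100 * m) by (unfold v; pose proof (Rmax_l 0 g1); nra).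
  set (y2 := x2 - w + v).
  exists y1, y2. split.
  - intros i Hi. unfold idx in Hi.
    destruct i as [|[|[|[|i]]]]; try lia.
    + replace (Defs.f 1 p1 p2 p3 y1 y2) with (g1 + c*w - c*v)
        by (unfold g1, y2, Defs.f, c; ring).
      replace (c * v) with (Rmax 0 g1 * (c * r)) by (unfold v; ring).
      rewrite Hcr, Rmult_1_r.
      unfold w, Rmax. destruct (Rle_dec 0 g2); destruct (Rle_dec 0 g1); nra.
    + replace (Defs.f 2 p1 p2 p3 y1 y2) with (g2 - w + v)
        by (unfold g2, y2, Defs.f; ring).
      unfold w, v, Rmax. destruct (Rle_dec 0 g2); destruct (Rle_dec 0 g1); nra.
    + assert (Ay2 : Rabs (y2 - x2) <= w + v) by (unfold y2; apply Rabs_le; lra).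
      assert (Y2 : Rabs y2 <= 1/9).
      { apply Rabs_le. pose proof (abs_bnd _ _ Ay2). lra. }
      pose proof (abs32_lip x2 y2 ltac:(lra) Y2) as L.
      replace (Defs.f 3 p1 p2 p3 y1 y2) with (F3 - t + (abs32 y2 - abs32 x2))
        by (unfold F3, y1, Defs.f; ring).
      unfold t. lra.
  - eapply Rle_trans; [apply n2_le|].
    replace (x1 - y1) with t by (unfold y1; ring).
    replace (x2 - y2) with (w - v) by (unfold y2; ring).
    assert (Rabs (w - v) <= w + v) by (apply Rabs_le; lra).
    rewrite Rabs_pos_eq by (unfold t; lra).
    unfold t. lra.
Qed.

Lemma phi0 i : idx i -> phi i 0 0 = 0.
Proof.
  intros Hi. unfold idx in Hi. unfold phi.
  destruct i as [|[|[|[|i]]]]; try lia; unfold Defs.f; try ring.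
  unfold abs32. rewrite Rabs_R0, sqrt_0. ring.
Qed.

Lemma grad1 : has_grad (phi 1) 0 0 0 (-1).
Proof.
  intros eps He. exists eps. split; [lra|]. intros h1 h2 Hn.
  unfold phi, Defs.f.
  replace (- (0 + h2) - / 2 * (0 + h1) ^ 2 - 0 + 0 * (0 + h2) -
   (- 0 - / 2 * 0 ^ 2 - 0 + 0 * 0) - (0 * h1 + -1 * h2)) with (-(/2 * h1^2)) by ring.
  rewrite Rabs_Ropp. pose proof (n2_1 h1 h2).
  rewrite Rabs_pos_eq by nra. rewrite <- (pow2_abs h1). pose proof (Rabs_pos h1). nra.
Qed.

Lemma grad2 : has_grad (phi 2) 0 0 0 1.
Proof.
  intros eps He. exists eps. split; [lra|]. intros h1 h2 Hn.
  unfold phi, Defs.f.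
  replace ((0 + h2) - / 2 * (0 + h1) ^ 2 - 0 + 0 * (0 + h1) -
   (0 - / 2 * 0 ^ 2 - 0 + 0 * 0) - (0 * h1 + 1 * h2)) with (-(/2 * h1^2)) by ring.
  rewrite Rabs_Ropp. pose proof (n2_1 h1 h2).
  rewrite Rabs_pos_eq by nra. rewrite <- (pow2_abs h1). pose proof (Rabs_pos h1). nra.
Qed.

Lemma grad3 : has_grad (phi 3) 0 0 1 0.
Proof.
  intros eps He. exists (eps^2). split; [nra|]. intros h1 h2 Hn.
  unfold phi, Defs.f.
  replace (0 + h2) with h2 by ring.
  replace (0 + h1 + abs32 h2 - 0 - (0 + abs32 0 - 0) - (1 * h1 + 0 * h2))
    with (abs32 h2 - abs32 0) by ring.
  unfold abs32. rewrite Rabs_R0, sqrt_0, Rmult_0_l, Rminus_0_r.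
  pose proof (n2_2 h1 h2). pose proof (Rabs_pos h2).
  assert (sqrt (Rabs h2) <= eps).
  { rewrite <- (sqrt_pow2 eps) by lra. apply sqrt_le_1_alt. lra. }
  pose proof (sqrt_pos (Rabs h2)).
  rewrite Rabs_pos_eq by nra. nra.
Qed.

Lemma grads i : idx i -> exists g1 g2, has_grad (phi i) 0 0 g1 g2.
Proof.
  intros Hi. unfold idx in Hi.
  destruct i as [|[|[|[|i]]]]; try lia.
  - exists 0, (-1). apply grad1.
  - exists 0, 1. apply grad2.
  - exists 1, 0. apply grad3.
Qed.

Lemma noMF : ~ MFCQ_at_0.
Proof.
  intros [d1 [d2 H]].
  assert (I1 : idx 1) by (unfold idx; lia). assert (I2 : idx 2) by (unfold idx; lia).
  pose proof (H 1%nat I1 (phi0 1 I1) _ _ grad1).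
  pose proof (H 2%nat I2 (phi0 2 I2) _ _ grad2). lra.
Qed.

Theorem mainTheorem12 :
  robinson_stable_at_0 /\
  (* 0 is feasible, every phi_i is differentiable at 0, and MFCQ fails *)
  (forall i, idx i -> phi i 0 0 <= 0) /\
  (forall i, idx i -> exists g1 g2, has_grad (phi i) 0 0 g1 g2) /\
  ~ MFCQ_at_0.
Proof.
  split; [apply rob|]. split; [intros i Hi; rewrite (phi0 i Hi); lra|].
  split; [apply grads|apply noMF].
Qed.
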